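(* Let $\mathcal{H}$ be a hypothesis class with Littlestone dimension $d<\infty$, and let $k\ge0$, $l\ge0$ be integers with $k\ge l+d$. Then \[ \mathrm{ELdim}(\mathcal{H}^l,k)\le (k+1)\, e^{\frac{2k+2}{k+1-l-d}}. \]
   Context: Hypotheses are maps $\mathcal{X}\to\{-1,+1\}$. The Littlestone dimension of $\mathcal{H}$ is the largest $d$ such that there is a complete binary tree of depth $d$ with internal nodes labeled by points of $\mathcal{X}$ such that every root-to-leaf path (left = label $-1$, right = $+1$) is agreed with by some $h\in\mathcal{H}$. $\mathcal{C}^l$ is the class of functions $x\mapsto1-2I(x\in D)$ with $D\subseteq\mathcal{X}$, $|D|\le l$; $\mathcal{H}^l=\{x\mapsto h(x)c(x):h\in\mathcal{H},c\in\mathcal{C}^l\}$. Extended mistake tree w.r.t. a class $\mathcal{F}$: a finite full binary tree (possibly a single leaf) in which each internal node $v$ is labeled by $x_v\in\mathcal{X}$ and has two solid downward edges, to its left child (label $-1$) and right child (label $+1$), plus one dashed downward edge to one of its two children; each leaf is labeled by some $h\in\mathcal{F}$ with $h(x_v)$ equal to the direction label at every internal node $v$ on the root-to-leaf path. A root-to-leaf path chooses at each internal node one downward edge; its length is its number of edges. The tree is $(k,m)$-difficult if every root-to-leaf path using at most $k$ solid edges has length at least $m$. $\mathrm{ELdim}(\mathcal{F},k)$ is the supremum of $m$ such that a $(k,m)$-difficult extended mistake tree w.r.t. $\mathcal{F}$ exists. *)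

(* Defs.v *)
(* Labels {-1,+1} are encoded as bool: false = -1, true = +1. *)
From Stdlib Require Import Reals List Arith.
Import ListNotations.

Inductive ltree (X : Type) : Type :=
| LLeaf : ltree X
| LNode : X -> ltree X -> ltree X -> ltree X.
Arguments LLeaf {X}.
Arguments LNode {X} _ _ _.

Fixpoint lcomplete {X : Type} (d : nat) (t : ltree X) : Prop :=
  match t, d with
  | LLeaf, 0 => True
  | LNode _ l r, S d' => lcomplete d' l /\ lcomplete d' r
  | _, _ => False
  end.

(* every root-to-leaf path (left = -1 = false, right = +1 = true) is agreed
   with by some hypothesis satisfying P *)
Fixpoint lshattered {X : Type} (P : (X -> bool) -> Prop) (t : ltree X) : Prop :=
  match t with
  | LLeaf => exists h, P h
  | LNode x l r =>
      lshattered (fun h => P h /\ h x = false) l /\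
      lshattered (fun h => P h /\ h x = true) r
  end.

Definition Ldim_eq {X : Type} (H : (X -> bool) -> Prop) (d : nat) : Prop :=
  (exists t, lcomplete d t /\ lshattered H t) /\
  (forall d' t, lcomplete d' t -> lshattered H t -> d' <= d).

(* f = h * c with c = 1 - 2 I(x in D), |D| <= l; D given by a list of length <= l *)
Definition Hl {X : Type} (H : (X -> bool) -> Prop) (l : nat) (f : X -> bool) : Prop :=
  exists h, H h /\ exists D : list X, length D <= l /\
    forall x, (In x D -> f x = negb (h x)) /\ (~ In x D -> f x = h x).

(* ENode x dash l r : internal node labelled x, solid edges to l (label -1)
   and r (label +1), dashed edge to r if dash = true, to l if dash = false. *)
Inductive etree (X : Type) : Type :=
| ELeaf : (X -> bool) -> etree X
| ENode : X -> bool -> etree X -> etree X -> etree X.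
Arguments ELeaf {X} _.
Arguments ENode {X} _ _ _ _.

(* leaf labels belong to F and agree with the directions on the path;
   cons records the (x_v, direction) pairs above the current subtree *)
Fixpoint etree_wf {X : Type} (F : (X -> bool) -> Prop) (cons : list (X * bool))
  (t : etree X) : Prop :=
  match t with
  | ELeaf h => F h /\ Forall (fun p => h (fst p) = snd p) cons
  | ENode x _ l r => etree_wf F ((x, false) :: cons) l /\
                     etree_wf F ((x, true) :: cons) r
  end.

Definition ext_mistake_tree {X : Type} (F : (X -> bool) -> Prop) (t : etree X) : Prop :=
  etree_wf F [] t.

(* every root-to-leaf path using at most k solid edges has length >= m *)
Fixpoint difficult {X : Type} (k m : nat) (t : etree X) : Prop :=
  match t with
  | ELeaf _ => m = 0
  | ENode _ dash l r =>
      difficult k (m - 1) (if dash then r else l) /\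
      (0 < k -> difficult (k - 1) (m - 1) l /\ difficult (k - 1) (m - 1) r)
  end.

Definition ELdim_le {X : Type} (F : (X -> bool) -> Prop) (k : nat) (B : R) : Prop :=
  forall (m : nat) (t : etree X), ext_mistake_tree F t -> difficult k m t -> (INR m <= B)%R.

(* Main.v *)
Require Import Defs.
From Stdlib Require Import Reals.
From Stdlib Require Import Lra Lia List Arith Classical ClassicalEpsilon.
Import ListNotations.


Fixpoint g (m j : nat) : nat :=
  match m with
  | 0 => 1
  | S m' => match j with 0 => 1 | S j' => g m' (S j') + g m' j' end
  end.

Lemma g_0r m : g m 0 = 1. Proof. destruct m; reflexivity. Qed.
Lemma g_pos m j : 1 <= g m j.
Proof. revert j; induction m; intros j; simpl; [lia|destruct j; [lia|specialize (IHm (S j)); lia]]. Qed.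

Fixpoint cnt {X} (t : etree X) (m : nat) : nat :=
  match t with
  | ELeaf _ => 1
  | ENode _ _ l r => match m with 0 => 1 | S m' => cnt l m' + cnt r m' end
  end.

Lemma cnt_pos {X} (t : etree X) m : 1 <= cnt t m.
Proof. revert m; induction t; intros m; simpl; [lia|destruct m; [lia|specialize (IHt1 m); lia]]. Qed.

Lemma difficult_cnt {X} (t : etree X) : forall k m, difficult k m t -> g m (S k) <= cnt t m.
Proof.
  induction t as [h| x dash l IHl r IHr]; intros k m Hd.
  - simpl in Hd. subst. simpl. lia.
  - destruct m as [|m']; [simpl; lia|].
    cbn [difficult] in Hd. replace (S m' - 1) with m' in Hd by lia.
    destruct Hd as [Hdash Hk].
    cbn [cnt g].
    destruct k as [|k'].
    + rewrite g_0r. destruct dash.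
      * specialize (IHr 0 m' Hdash). pose proof (cnt_pos l m'). lia.
      * specialize (IHl 0 m' Hdash). pose proof (cnt_pos r m'). lia.
    + destruct (Hk ltac:(lia)) as [H1 H2]. replace (S k' - 1) with k' in * by lia.
      specialize (IHl k' m' H1) as A1. specialize (IHr k' m' H2) as A2.
      destruct dash.
      * specialize (IHr _ _ Hdash). lia.
      * specialize (IHl _ _ Hdash). lia.
Qed.

Fixpoint exl {X} (P : (X -> bool) -> Prop) (t : etree X) : Prop :=
  match t with
  | ELeaf h => P h
  | ENode x _ l r => exl (fun h => P h /\ h x = false) l \/ exl (fun h => P h /\ h x = true) r
  end.

Definition ind (Q : Prop) : nat := if excluded_middle_informative Q then 1 else 0.

Lemma ind_le1 Q : ind Q <= 1. Proof. unfold ind; destruct excluded_middle_informative; lia. Qed.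
Lemma ind_true (Q : Prop) : Q -> ind Q = 1. Proof. unfold ind; destruct excluded_middle_informative; tauto. Qed.
Lemma ind_false (Q : Prop) : ~ Q -> ind Q = 0. Proof. unfold ind; destruct excluded_middle_informative; tauto. Qed.
Lemma ind_mono (Q1 Q2 : Prop) : (Q1 -> Q2) -> ind Q1 <= ind Q2.
Proof. unfold ind; do 2 destruct excluded_middle_informative; tauto || lia. Qed.
Lemma ind_or (Q Q1 Q2 : Prop) : (Q -> Q1 \/ Q2) -> ind Q <= ind Q1 + ind Q2.
Proof. unfold ind; do 3 destruct excluded_middle_informative; try lia; tauto. Qed.

Lemma exl_mono {X} (t : etree X) : forall P Q : (X -> bool) -> Prop,
  (forall h, P h -> Q h) -> exl P t -> exl Q t.
Proof.
  induction t as [h|x b l IHl r IHr]; intros P Q HPQ H; simpl in *; [auto|].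
  destruct H as [H|H]; [left; eapply IHl; [|exact H]|right; eapply IHr; [|exact H]];
  simpl; intros h [H1 H2]; auto.
Qed.

Lemma exl_or {X} (t : etree X) : forall P Q1 Q2 : (X -> bool) -> Prop,
  (forall h, P h -> Q1 h \/ Q2 h) -> exl P t -> exl Q1 t \/ exl Q2 t.
Proof.
  induction t as [h|x b l IHl r IHr]; intros P Q1 Q2 HPQ H; simpl in *; [auto|].
  destruct H as [H|H].
  - assert (HH: forall h, P h /\ h x = false -> (Q1 h /\ h x = false) \/ (Q2 h /\ h x = false))
      by (intros h [H1 H2]; destruct (HPQ h H1); tauto).
    destruct (IHl _ _ _ HH H); tauto.
  - assert (HH: forall h, P h /\ h x = true -> (Q1 h /\ h x = true) \/ (Q2 h /\ h x = true))
      by (intros h [H1 H2]; destruct (HPQ h H1); tauto).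
    destruct (IHr _ _ _ HH H); tauto.
Qed.

Lemma exl_ex {X} (t : etree X) : forall P, exl P t -> exists h, P h.
Proof.
  induction t as [h|x b l IHl r IHr]; intros P H; simpl in *; [eauto|].
  destruct H as [H|H]; [destruct (IHl _ H) as [h [H1 _]]|destruct (IHr _ H) as [h [H1 _]]]; eauto.
Qed.

Fixpoint Rc {X} (P : (X -> bool) -> Prop) (t : etree X) (m : nat) : nat :=
  match t with
  | ELeaf h => ind (P h)
  | ENode x b l r =>
      match m with
      | 0 => ind (exl P (ENode x b l r))
      | S m' => Rc (fun h => P h /\ h x = false) l m' + Rc (fun h => P h /\ h x = true) r m'
      end
  end.

Lemma Rc_base {X} (t : etree X) P m : (m = 0 \/ exists h, t = ELeaf h) -> Rc P t m <= 1.
Proof.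
  intros [->|[h ->]]; [destruct t|]; simpl; apply ind_le1.
Qed.

Lemma Rc_mono {X} (t : etree X) : forall m (P Q : (X -> bool) -> Prop),
  (forall h, P h -> Q h) -> Rc P t m <= Rc Q t m.
Proof.
  induction t as [h|x b l IHl r IHr]; intros m P Q HPQ; simpl.
  - apply ind_mono; auto.
  - destruct m.
    + apply ind_mono. apply (exl_mono (ENode x b l r)). auto.
    + apply Nat.add_le_mono; [apply IHl|apply IHr]; intros h [H1 H2]; auto.
Qed.

Lemma Rc_or {X} (t : etree X) : forall m (P Q1 Q2 : (X -> bool) -> Prop),
  (forall h, P h -> Q1 h \/ Q2 h) -> Rc P t m <= Rc Q1 t m + Rc Q2 t m.
Proof.
  induction t as [h|x b l IHl r IHr]; intros m P Q1 Q2 HPQ; simpl.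
  - apply ind_or; auto.
  - destruct m.
    + apply ind_or. apply (exl_or (ENode x b l r)). auto.
    + pose proof (IHl m (fun h => P h /\ h x = false) (fun h => Q1 h /\ h x = false) (fun h => Q2 h /\ h x = false)).
      pose proof (IHr m (fun h => P h /\ h x = true) (fun h => Q1 h /\ h x = true) (fun h => Q2 h /\ h x = true)).
      assert (E1: forall h, P h /\ h x = false -> (Q1 h /\ h x = false) \/ (Q2 h /\ h x = false))
        by (intros h [K1 K2]; destruct (HPQ h K1); tauto).
      assert (E2: forall h, P h /\ h x = true -> (Q1 h /\ h x = true) \/ (Q2 h /\ h x = true))
        by (intros h [K1 K2]; destruct (HPQ h K1); tauto).
      specialize (H E1). specialize (H0 E2). lia.
Qed.

Lemma Rc_empty {X} (t : etree X) : forall m (P : (X -> bool) -> Prop),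
  (forall h, ~ P h) -> Rc P t m = 0.
Proof.
  induction t as [h|x b l IHl r IHr]; intros m P HP; simpl.
  - apply ind_false; auto.
  - destruct m.
    + apply ind_false. intro H. destruct (exl_ex (ENode x b l r) _ H) as [h Hh]. exact (HP h Hh).
    + rewrite IHl, IHr; auto; intros h [H1 _]; exact (HP h H1).
Qed.

Lemma wf_exl {X} (F : (X -> bool) -> Prop) (t : etree X) : forall cons,
  etree_wf F cons t -> exl (fun h => F h /\ Forall (fun p => h (fst p) = snd p) cons) t.
Proof.
  induction t as [h|x b l IHl r IHr]; intros cons H; simpl in *; [exact H|].
  destruct H as [H1 H2]. left. eapply exl_mono; [|apply IHl; exact H1].
  simpl. intros h [Hf HF]. inversion HF; subst. simpl in *. auto.
Qed.

Lemma cnt_le_Rc {X} (F : (X -> bool) -> Prop) (t : etree X) : forall cons m,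
  etree_wf F cons t -> cnt t m <= Rc (fun h => F h /\ Forall (fun p => h (fst p) = snd p) cons) t m.
Proof.
  induction t as [h|x b l IHl r IHr]; intros cons m H; simpl in *.
  - rewrite ind_true; auto.
  - destruct m.
    + rewrite ind_true; [lia|]. apply (wf_exl F (ENode x b l r) cons). simpl. exact H.
    + destruct H as [H1 H2]. apply Nat.add_le_mono.
      * eapply Nat.le_trans; [apply IHl; exact H1|]. apply Rc_mono.
        intros h [Hf HF]. inversion HF; subst. simpl in *. auto.
      * eapply Nat.le_trans; [apply IHr; exact H2|]. apply Rc_mono.
        intros h [Hf HF]. inversion HF; subst. simpl in *. auto.
Qed.

Definition LdimLe {X} (A : (X -> bool) -> Prop) (a : nat) : Prop :=
  forall n t, lcomplete n t -> lshattered A t -> n <= a.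

Lemma lsh_ex {X} (t : ltree X) : forall P, lshattered P t -> exists h, P h.
Proof.
  induction t as [|x l IHl r IHr]; intros P H; simpl in *; [exact H|].
  destruct H as [H _]. destruct (IHl _ H) as [h [Hh _]]; eauto.
Qed.

Lemma lsh_mono {X} (t : ltree X) : forall P Q : (X -> bool) -> Prop,
  (forall h, P h -> Q h) -> lshattered P t -> lshattered Q t.
Proof.
  induction t as [|x l IHl r IHr]; intros P Q HPQ H; simpl in *.
  - destruct H as [h Hh]; eauto.
  - destruct H as [H1 H2]; split; [eapply IHl|eapply IHr]; eauto; simpl; intros h [K1 K2]; auto.
Qed.

Lemma truncate {X} (t : ltree X) : forall P n j, lcomplete n t -> lshattered P t -> j <= n ->
  exists t', lcomplete j t' /\ lshattered P t'.
Proof.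
  induction t as [|x l IHl r IHr]; intros P n j Hc Hs Hj.
  - destruct n; simpl in Hc; [|contradiction]. assert (j = 0) by lia; subst.
    exists LLeaf; simpl; split; auto.
  - destruct n; simpl in Hc; [contradiction|]. destruct Hc as [Hc1 Hc2].
    simpl in Hs. destruct Hs as [Hs1 Hs2].
    destruct j as [|j'].
    + exists LLeaf; simpl; split; auto. destruct (lsh_ex _ _ Hs1) as [h [Hh _]]; eauto.
    + destruct (IHl _ _ j' Hc1 Hs1 ltac:(lia)) as [l' [A1 A2]].
      destruct (IHr _ _ j' Hc2 Hs2 ltac:(lia)) as [r' [B1 B2]].
      exists (LNode x l' r'); simpl; auto.
Qed.

Lemma LdimLe_mono {X} (A B : (X -> bool) -> Prop) a :
  (forall h, B h -> A h) -> LdimLe A a -> LdimLe B a.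
Proof. intros HBA HA n t Hc Hs. apply (HA n t Hc). eapply lsh_mono; eauto. Qed.

Lemma LdimLe_split_S {X} (A : (X -> bool) -> Prop) (x : X) a :
  LdimLe A (S a) ->
  LdimLe (fun h => A h /\ h x = false) a \/ LdimLe (fun h => A h /\ h x = true) a.
Proof.
  intros HA. destruct (classic (LdimLe (fun h => A h /\ h x = false) a)) as [H0|N0]; [left; exact H0|right].
  intros n t Hc Hs. apply NNPP; intro Hn.
  apply N0. intros n0 t0 Hc0 Hs0. apply NNPP; intro Hn0.
  destruct (truncate t0 _ n0 (S a) Hc0 Hs0 ltac:(lia)) as [t0' [C0 S0]].
  destruct (truncate t _ n (S a) Hc Hs ltac:(lia)) as [t1' [C1 S1]].
  specialize (HA (S (S a)) (LNode x t0' t1')). simpl in HA.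
  assert (S (S a) <= S a) by (apply HA; auto). lia.
Qed.

Lemma LdimLe_split_0 {X} (A : (X -> bool) -> Prop) (x : X) :
  LdimLe A 0 ->
  (forall h, ~ (A h /\ h x = false)) \/ (forall h, ~ (A h /\ h x = true)).
Proof.
  intros HA. destruct (classic (exists h, A h /\ h x = false)) as [[h0 H0]|N];
    [right|left; intros h Hh; apply N; eauto].
  intros h1 H1. specialize (HA 1 (LNode x LLeaf LLeaf)). simpl in HA.
  assert (1 <= 0) by (apply HA; [auto|split; eauto]). lia.
Qed.

Lemma transfer {X} (t : ltree X) : forall (P Q : (X -> bool) -> Prop) (x : X) c,
  (forall h, P h -> h x = c) ->
  (forall h', P h' -> exists h, Q h /\ forall y, y <> x -> h' y = h y) ->
  lshattered P t -> lshattered Q t.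
Proof.
  induction t as [|y l IHl r IHr]; intros P Q x c Hc HPQ Hs; simpl in *.
  - destruct Hs as [h' Hh']. destruct (HPQ h' Hh') as [h [Hh _]]; eauto.
  - destruct Hs as [Hs1 Hs2]. destruct (classic (y = x)) as [->|Hyx].
    + destruct c.
      * destruct (lsh_ex _ _ Hs1) as [h [Hh Hx]]. rewrite (Hc h Hh) in Hx. discriminate.
      * destruct (lsh_ex _ _ Hs2) as [h [Hh Hx]]. rewrite (Hc h Hh) in Hx. discriminate.
    + split.
      * apply (IHl (fun h => P h /\ h y = false) _ x c); auto; [intros h [K1 _]; auto|].
        intros h' [K1 K2]. destruct (HPQ h' K1) as [h [Hh Hag]]. exists h; split; auto.
        split; auto. rewrite <- Hag; auto.
      * apply (IHr (fun h => P h /\ h y = true) _ x c); auto; [intros h [K1 _]; auto|].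
        intros h' [K1 K2]. destruct (HPQ h' K1) as [h [Hh Hag]]. exists h; split; auto.
        split; auto. rewrite <- Hag; auto.
Qed.

Definition E {X} (A : (X -> bool) -> Prop) (r : nat) (f : X -> bool) : Prop :=
  exists h, A h /\ exists D : list X, length D <= r /\
    forall x, (In x D -> f x = negb (h x)) /\ (~ In x D -> f x = h x).

Definition A' {X} (A : (X -> bool) -> Prop) (x : X) (c : bool) (h' : X -> bool) : Prop :=
  h' x = c /\ exists h, A h /\ h x = negb c /\ forall y, y <> x -> h' y = h y.

Lemma LdimLe_A' {X} (A : (X -> bool) -> Prop) (x : X) c b :
  LdimLe (fun h => A h /\ h x = negb c) b -> LdimLe (A' A x c) b.
Proof.
  intros HL n t Hc Hs. apply (HL n t Hc).
  apply (transfer t (A' A x c) _ x c); auto.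
  - intros h [H _]; auto.
  - intros h' [_ [h [K1 [K2 K3]]]]. exists h; auto.
Qed.

Lemma E_empty {X} (A : (X -> bool) -> Prop) r : (forall h, ~ A h) -> forall f, ~ E A r f.
Proof. intros HA f [h [Hh _]]. exact (HA h Hh). Qed.

Lemma A'_empty {X} (A : (X -> bool) -> Prop) x c :
  (forall h, ~ (A h /\ h x = negb c)) -> forall h, ~ A' A x c h.
Proof. intros HA h' [_ [h [K1 [K2 _]]]]. exact (HA h (conj K1 K2)). Qed.

Lemma filter_length_le {T} (p : T -> bool) (l : list T) : length (filter p l) <= length l.
Proof. induction l; simpl; [lia|destruct (p a); simpl; lia]. Qed.

Lemma filter_length_lt {T} (p : T -> bool) (l : list T) a :
  In a l -> p a = false -> length (filter p l) < length l.
Proof.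
  induction l as [|b l IH]; simpl; intros Hin Hp; [contradiction|].
  destruct Hin as [->|Hin].
  - rewrite Hp. pose proof (filter_length_le p l). lia.
  - destruct (p b); simpl; specialize (IH Hin Hp); lia.
Qed.

Lemma E_split0 {X} (A : (X -> bool) -> Prop) (x : X) c f :
  E A 0 f -> f x = c -> E (fun h => A h /\ h x = c) 0 f.
Proof.
  intros [h [HA [D [HD Hf]]]] Hx. destruct D; simpl in HD; [|lia].
  exists h. split; [split; auto|exists []; split; auto].
  destruct (Hf x) as [_ H2]. rewrite <- H2; auto.
Qed.

Lemma E_split {X} (A : (X -> bool) -> Prop) r (x : X) c f :
  E A (S r) f -> f x = c -> E (fun h => A h /\ h x = c) (S r) f \/ E (A' A x c) r f.
Proof.
  intros [h [HA [D [HD Hf]]]] Hx. destruct (Bool.bool_dec (h x) c) as [Hc|Hc].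
  - left. exists h. split; [split; auto|]. exists D. auto.
  - right. assert (HxD: In x D).
    { apply NNPP; intro N. destruct (Hf x) as [_ H2]. rewrite H2 in Hx by auto. contradiction. }
    set (h' := fun y => if excluded_middle_informative (y = x) then c else h y).
    exists h'. split.
    + split.
      * unfold h'. destruct (excluded_middle_informative (x = x)); [reflexivity|congruence].
      * exists h. split; auto. split.
        -- destruct c, (h x); simpl in *; congruence.
        -- intros y Hy. unfold h'. destruct (excluded_middle_informative (y = x)); [contradiction|reflexivity].
    + exists (filter (fun y => if excluded_middle_informative (y = x) then false else true) D). split.
      * assert (length (filter (fun y => if excluded_middle_informative (y = x) then false else true) D) < length D).
        { apply (filter_length_lt _ _ x HxD). destruct (excluded_middle_informative (x = x)); congruence. }
        lia.
      * intros y. split.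
        -- intro Hin. apply filter_In in Hin. destruct Hin as [HyD Hp].
           destruct (excluded_middle_informative (y = x)) as [e|ne]; [discriminate|].
           destruct (Hf y) as [H1 _]. rewrite H1 by auto. unfold h'.
           destruct (excluded_middle_informative (y = x)); [contradiction|reflexivity].
        -- intro Hnin. unfold h'. destruct (excluded_middle_informative (y = x)) as [->|ne]; [exact Hx|].
           assert (~ In y D).
           { intro HyD. apply Hnin. apply filter_In. split; auto.
             destruct (excluded_middle_informative (y = x)); [contradiction|reflexivity]. }
           destruct (Hf y) as [_ H2]. auto.
Qed.

Lemma expert {X} : forall m (t : etree X) A r a, LdimLe A a -> Rc (E A r) t m <= g m a * g m r.
Proof.
  induction m as [|m IH]; intros t A r a HA.
  - eapply Nat.le_trans; [apply Rc_base; left; reflexivity|].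
    pose proof (g_pos 0 a); pose proof (g_pos 0 r); nia.
  - destruct t as [h|x b tl tr].
    + eapply Nat.le_trans; [apply Rc_base; right; eauto|].
      pose proof (g_pos (S m) a); pose proof (g_pos (S m) r); nia.
    + cbn [Rc].
      assert (HA0 : LdimLe (fun h => A h /\ h x = false) a) by (eapply LdimLe_mono; [|exact HA]; intros h [K _]; auto).
      assert (HA1 : LdimLe (fun h => A h /\ h x = true) a) by (eapply LdimLe_mono; [|exact HA]; intros h [K _]; auto).
      destruct r as [|r'].
      * assert (S0 : Rc (fun h => E A 0 h /\ h x = false) tl m <= Rc (E (fun h => A h /\ h x = false) 0) tl m)
          by (apply Rc_mono; intros f [K1 K2]; apply E_split0; auto).
        assert (S1 : Rc (fun h => E A 0 h /\ h x = true) tr m <= Rc (E (fun h => A h /\ h x = true) 0) tr m)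
          by (apply Rc_mono; intros f [K1 K2]; apply E_split0; auto).
        destruct a as [|a'].
        -- rewrite ?g_0r. destruct (LdimLe_split_0 A x HA) as [Em|Em].
           ++ rewrite (Rc_empty tl m _ (E_empty _ 0 Em)) in S0.
              pose proof (IH tr _ 0 0 HA1). rewrite ?g_0r in *. lia.
           ++ rewrite (Rc_empty tr m _ (E_empty _ 0 Em)) in S1.
              pose proof (IH tl _ 0 0 HA0). rewrite ?g_0r in *. lia.
        -- cbn [g]. rewrite ?g_0r. destruct (LdimLe_split_S A x a' HA) as [L|L].
           ++ pose proof (IH tl _ 0 _ L). pose proof (IH tr _ 0 _ HA1). rewrite ?g_0r in *. lia.
           ++ pose proof (IH tl _ 0 _ HA0). pose proof (IH tr _ 0 _ L). rewrite ?g_0r in *. lia.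
      * assert (S0 : Rc (fun h => E A (S r') h /\ h x = false) tl m <=
                     Rc (E (fun h => A h /\ h x = false) (S r')) tl m + Rc (E (A' A x false) r') tl m)
          by (apply Rc_or; intros f [K1 K2]; apply E_split; auto).
        assert (S1 : Rc (fun h => E A (S r') h /\ h x = true) tr m <=
                     Rc (E (fun h => A h /\ h x = true) (S r')) tr m + Rc (E (A' A x true) r') tr m)
          by (apply Rc_or; intros f [K1 K2]; apply E_split; auto).
        destruct a as [|a'].
        -- cbn [g]. rewrite ?g_0r. destruct (LdimLe_split_0 A x HA) as [Em|Em].
           ++ rewrite (Rc_empty tl m _ (E_empty _ _ Em)) in S0.
              rewrite (Rc_empty tr m (E (A' A x true) r') (E_empty _ _ (A'_empty A x true Em))) in S1.
              pose proof (IH tl _ r' 0 (LdimLe_A' A x false 0 HA1)).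
              pose proof (IH tr _ (S r') 0 HA1). rewrite ?g_0r in *. lia.
           ++ rewrite (Rc_empty tr m _ (E_empty _ _ Em)) in S1.
              rewrite (Rc_empty tl m (E (A' A x false) r') (E_empty _ _ (A'_empty A x false Em))) in S0.
              pose proof (IH tr _ r' 0 (LdimLe_A' A x true 0 HA0)).
              pose proof (IH tl _ (S r') 0 HA0). rewrite ?g_0r in *. lia.
        -- cbn [g]. destruct (LdimLe_split_S A x a' HA) as [L|L].
           ++ pose proof (IH tl _ (S r') _ L).
              pose proof (IH tl _ r' _ (LdimLe_A' A x false _ HA1)).
              pose proof (IH tr _ (S r') _ HA1).
              pose proof (IH tr _ r' _ (LdimLe_A' A x true _ L)).
              cbn [g] in *. nia.
           ++ pose proof (IH tl _ (S r') _ HA0).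
              pose proof (IH tl _ r' _ (LdimLe_A' A x false _ L)).
              pose proof (IH tr _ (S r') _ L).
              pose proof (IH tr _ r' _ (LdimLe_A' A x true _ HA0)).
              cbn [g] in *. nia.
Qed.

Lemma pow_le1 (z : R) a : (0 <= z <= 1)%R -> (z ^ a <= 1)%R.
Proof. intros Hz. induction a; simpl; [lra|]. nra. Qed.

Lemma g_ub : forall n a (z : R), (0 <= z <= 1)%R -> (INR (g n a) * z ^ a <= (1 + z) ^ n)%R.
Proof.
  induction n as [|n IH]; intros a z Hz.
  - simpl. pose proof (pow_le1 z a Hz). lra.
  - destruct a as [|a'].
    + simpl. rewrite Rmult_1_r. pose proof (pow_R1_Rle (1+z) n ltac:(lra)). nra.
    + cbn [g]. rewrite plus_INR. pose proof (IH (S a') z Hz) as H1. pose proof (IH a' z Hz) as H2.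
      cbn [pow] in *. pose proof (pow_le z a' (proj1 Hz)).
      assert (z * (INR (g n a') * z ^ a') <= z * (1 + z) ^ n)%R by (apply Rmult_le_compat_l; lra).
      nra.
Qed.

Fixpoint c (m j : nat) : nat :=
  match m, j with
  | _, 0 => 1
  | 0, S _ => 0
  | S m', S j' => c m' (S j') + c m' j'
  end.

Lemma g_ge_c : forall m j, c m j <= g m j.
Proof.
  induction m as [|m IH]; intros j; destruct j; simpl; try lia.
  pose proof (IH (S j)); pose proof (IH j); lia.
Qed.

Lemma c_0r m : c m 0 = 1. Proof. destruct m; reflexivity. Qed.

Lemma absorb : forall m j, S j * c (S m) (S j) = S m * c m j.
Proof.
  induction m as [|m IH]; intros j.
  - destruct j; simpl; lia.
  - assert (E1 : c (S (S m)) (S j) = c (S m) (S j) + c (S m) j) by reflexivity.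
    rewrite E1. rewrite Nat.mul_add_distr_l, IH.
    destruct j as [|j'].
    + rewrite !c_0r. lia.
    + assert (E2 : c (S m) (S j') = c m (S j') + c m j') by reflexivity.
      pose proof (IH j') as H3.
      rewrite E2 in *. rewrite (Nat.mul_succ_l (S j')), H3. ring.
Qed.

Lemma c_lb : forall j m, 1 <= j <= m -> ((INR m / INR j) ^ j <= INR (c m j))%R.
Proof.
  induction j as [|j IH]; intros m Hj; [lia|].
  destruct m as [|m']; [lia|].
  assert (HA : (INR (c (S m') (S j)) = INR (S m') / INR (S j) * INR (c m' j))%R).
  { pose proof (absorb m' j) as Ha. apply (f_equal INR) in Ha. rewrite !mult_INR in Ha.
    assert (0 < INR (S j))%R by (apply lt_0_INR; lia).
    apply (Rmult_eq_reg_l (INR (S j))); [rewrite Ha; field; lra|lra]. }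
  rewrite HA. cbn [pow].
  assert (Hpos : (0 < INR (S m') / INR (S j))%R) by (apply Rdiv_lt_0_compat; apply lt_0_INR; lia).
  apply Rmult_le_compat_l; [lra|].
  destruct j as [|j'].
  - simpl. rewrite c_0r. simpl. lra.
  - eapply Rle_trans; [|apply IH; lia].
    apply pow_incr. split; [lra|].
    rewrite !S_INR. rewrite !S_INR in Hpos.
    assert (INR (S j') <= INR m')%R by (apply le_INR; lia). rewrite S_INR in H.
    pose proof (pos_INR j').
    apply (Rmult_le_reg_r ((INR j' + 1 + 1) * (INR j' + 1))); [nra|].
    field_simplify; [|lra|lra]. nra.
Qed.

Lemma pow_lt_strict (a b : R) n : (0 <= a < b)%R -> 1 <= n -> (a ^ n < b ^ n)%R.
Proof.
  intros Hab Hn. induction n as [|n IH]; [lia|].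
  destruct n as [|n']; [simpl; lra|].
  specialize (IH ltac:(lia)). cbn [pow] in *.
  pose proof (pow_le a (S n') (proj1 Hab)). cbn [pow] in H. nra.
Qed.

Lemma exp_pow' (y : R) n : (exp y ^ n = exp (INR n * y))%R.
Proof.
  induction n as [|n IH]; [simpl; rewrite Rmult_0_l, exp_0; reflexivity|].
  cbn [pow]. rewrite IH, S_INR, <- exp_plus. f_equal. ring.
Qed.

Theorem mainTheorem6 (X : Type) (H : (X -> bool) -> Prop) (d k l : nat) :
  Ldim_eq H d -> l + d <= k ->
  ELdim_le (Hl H l) k
    ((INR k + 1) * exp ((2 * INR k + 2) / (INR k + 1 - INR l - INR d)))%R.
Proof.
  intros HL Hk m t Hext Hdiff.
  assert (Hcomb : g m (S k) <= g m d * g m l).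
  { eapply Nat.le_trans; [exact (difficult_cnt t k m Hdiff)|].
    eapply Nat.le_trans; [apply (cnt_le_Rc (Hl H l) t nil m); exact Hext|].
    eapply Nat.le_trans; [apply (Rc_mono t m _ (E H l)); intros h [Hh _]; exact Hh|].
    apply expert. destruct HL as [_ HL]. exact HL. }
  apply Rnot_lt_le; intro Hgt.
  assert (Hkd : (INR l + INR d <= INR k)%R) by (rewrite <- plus_INR; apply le_INR; lia).
  set (Sr := (INR k + 1 - INR l - INR d)%R) in *.
  assert (HSr : (1 <= Sr)%R) by (unfold Sr; lra).
  set (K := (INR k + 1)%R) in *.
  assert (HK : (1 <= K)%R) by (unfold K; pose proof (pos_INR k); lra).
  set (Ex := exp ((2 * INR k + 2) / Sr)) in *.
  assert (HEx : (1 < Ex)%R).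
  { unfold Ex. pose proof (exp_ineq1_le ((2 * INR k + 2) / Sr)).
    assert (0 < (2 * INR k + 2) / Sr)%R by (apply Rdiv_lt_0_compat; pose proof (pos_INR k); lra). lra. }
  assert (HmK : (K < INR m)%R) by nra.
  set (x := (INR m / K)%R).
  set (z := (K / INR m)%R).
  assert (Hxz : (x * z = 1)%R) by (unfold x, z; field; lra).
  assert (Hx : (Ex < x)%R) by (unfold x; apply (Rmult_lt_reg_r K); [lra|]; field_simplify; lra).
  assert (Hz : (0 < z < 1)%R) by (unfold z; split; [apply Rdiv_lt_0_compat; lra|apply (Rmult_lt_reg_r (INR m)); [lra|]; field_simplify; lra]).
  assert (Hlow : (x ^ S k <= INR (g m (S k)))%R).
  { eapply Rle_trans; [|apply le_INR; apply g_ge_c].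
    assert (HSk : S k <= m) by (assert (HmK2 : (INR (S k) < INR m)%R) by (rewrite S_INR; exact HmK); apply INR_lt in HmK2; lia).
    replace x with (INR m / INR (S k))%R by (unfold x, K; rewrite S_INR; reflexivity).
    apply c_lb; lia. }
  assert (Hexpz : ((1 + z) ^ m <= exp K)%R).
  { eapply Rle_trans; [apply pow_incr; split; [lra|apply exp_ineq1_le]|].
    rewrite exp_pow'. right. f_equal. unfold z. field. lra. }
  pose proof (g_ub m d z ltac:(lra)) as Ud.
  pose proof (g_ub m l z ltac:(lra)) as Ul.
  apply le_INR in Hcomb. rewrite mult_INR in Hcomb.
  assert (Hzd : (0 <= z ^ d)%R) by (apply pow_le; lra).
  assert (Hzl : (0 <= z ^ l)%R) by (apply pow_le; lra).
  assert (Hprod : (x ^ S k * (z ^ d * z ^ l) <= exp K * exp K)%R).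
  { eapply Rle_trans.
    - apply Rmult_le_compat_r; [nra|]. eapply Rle_trans; [exact Hlow|exact Hcomb].
    - pose proof (pos_INR (g m d)). pose proof (pos_INR (g m l)).
      assert (INR (g m d) * z ^ d <= exp K)%R by lra.
      assert (INR (g m l) * z ^ l <= exp K)%R by lra.
      replace (INR (g m d) * INR (g m l) * (z ^ d * z ^ l))%R
        with ((INR (g m d) * z ^ d) * (INR (g m l) * z ^ l))%R by ring.
      apply Rmult_le_compat; nra. }
  set (sn := S k - (d + l)).
  assert (Hsn : S k = sn + (d + l)) by (unfold sn; lia).
  rewrite Hsn, pow_add in Hprod.
  assert (Hxz2 : (x ^ (d + l) * (z ^ d * z ^ l) = 1)%R).
  { rewrite <- pow_add, <- Rpow_mult_distr, Hxz. apply pow1. }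
  replace (x ^ sn * x ^ (d + l) * (z ^ d * z ^ l))%R with (x ^ sn * (x ^ (d + l) * (z ^ d * z ^ l)))%R in Hprod by ring.
  rewrite Hxz2, Rmult_1_r, <- exp_plus in Hprod.
  assert (HsnR : INR sn = Sr).
  { unfold sn, Sr. rewrite minus_INR by lia. rewrite S_INR, plus_INR. unfold K. ring. }
  assert (Hbig : (Ex ^ sn < x ^ sn)%R) by (apply pow_lt_strict; [lra|unfold sn; lia]).
  unfold Ex in Hbig. rewrite exp_pow', HsnR in Hbig.
  replace (Sr * ((2 * INR k + 2) / Sr))%R with (K + K)%R in Hbig by (unfold K; field; lra).
  lra.
Qed.
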